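(* For the $2$-server problem on the line, for any instance $I$, any prediction, and any $\lambda\in[0,1]$, there is $c\ge0$ depending only on the initial configuration such that $\mathrm{LambdaDC}(I)\le(1+\lambda)\cdot\mathrm{FtP}(I)+c$.
   Context: The $2$-server problem on the line: servers on $\mathbb{R}$ labeled $s_1\le s_2$, requests revealed online and served by moving a server to them; cost = total distance moved. A prediction gives for each request $r_t$ an index $p_t\in\{1,2\}$; FtP is the algorithm serving each request by the predicted server (relabeling servers by position), and $\mathrm{FtP}(I)$ its cost for the given prediction. LambdaDC (given the same prediction): if $r_t<s_1$ or $r_t>s_2$, move only the closest server; if $s_1<r_t<s_2$ and $p_t=1$, move $s_1$ at speed $1$ and $s_2$ at speed $\lambda$ towards $r_t$ until one reaches it; if $p_t=2$, the speeds are swapped. *)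

(* Defs.v *)
From Stdlib Require Import Reals List.
Open Scope R_scope.

(* Server index predicted for a request: p_t in {1,2}. *)
Inductive idx : Type := One | Two.

(* A configuration is a pair (s1, s2) of server positions with s1 <= s2
   (servers relabeled by position). *)
Definition config := (R * R)%type.

(* One step of FtP: move the predicted server to r, then relabel by position.
   Returns (cost of the step, new configuration). *)
Definition ftp_step (p : idx) (c : config) (r : R) : R * config :=
  let (a, b) := c in
  match p with
  | One => (Rabs (a - r), (Rmin r b, Rmax r b))
  | Two => (Rabs (b - r), (Rmin a r, Rmax a r))
  end.

(* Outside [s1,s2]: move only the closest server.
   Strictly inside, p = 1: s1 at speed 1, s2 at speed lam towards r until one
   reaches r (s1 reaches first iff lam*(r-s1) <= s2-r; otherwise lam > 0 and
   s2 reaches first after time (s2-r)/lam).  p = 2: speeds swapped. *)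
Definition ldc_step (lam : R) (p : idx) (c : config) (r : R) : R * config :=
  let (a, b) := c in
  if Rle_dec r a then (a - r, (r, b))
  else if Rle_dec b r then (r - b, (a, r))
  else match p with
  | One =>
      if Rle_dec (lam * (r - a)) (b - r)
      then ((r - a) + lam * (r - a), (r, b - lam * (r - a)))
      else ((b - r) / lam + (b - r), (a + (b - r) / lam, r))
  | Two =>
      if Rle_dec (lam * (b - r)) (r - a)
      then ((b - r) + lam * (b - r), (a + lam * (b - r), r))
      else ((r - a) + (r - a) / lam, (r, b - (r - a) / lam))
  end.

Fixpoint run_cost (step : idx -> config -> R -> R * config)
    (c : config) (t : nat) (rs : list R) (p : nat -> idx) : R :=
  match rs with
  | nil => 0
  | r :: rs' =>
      let (k, c') := step (p t) c r in
      k + run_cost step c' (S t) rs' p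
  end.

(* Instance I = (initial configuration (x1,x2), requests rs); times start at 0. *)
Definition FtP (x1 x2 : R) (rs : list R) (p : nat -> idx) : R :=
  run_cost ftp_step (x1, x2) 0 rs p.

Definition LambdaDC (lam : R) (x1 x2 : R) (rs : list R) (p : nat -> idx) : R :=
  run_cost (ldc_step lam) (x1, x2) 0 rs p.

(* Main.v *)
Require Import Defs.
From Stdlib Require Import Reals List Lra Psatz.
Open Scope R_scope.

Definition phi (l : R) (x y : config) : R :=
  (1 + l) * (Rabs (fst x - fst y) + Rabs (snd x - snd y)) + l * (snd x - fst x).

Ltac crush :=
  simpl; unfold Rmin, Rmax, Rabs;
  repeat match goal with
  | |- context [Rcase_abs ?u] => destruct (Rcase_abs u)
  | |- context [Rle_dec ?u ?v] => destruct (Rle_dec u v)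
  end; simpl in *; nra.

Lemma step (l : R) (p : idx) (a b y1 y2 r : R) :
  0 <= l <= 1 -> a <= b -> y1 <= y2 ->
  fst (ldc_step l p (a,b) r) + phi l (snd (ldc_step l p (a,b) r)) (snd (ftp_step p (y1,y2) r))
   <= (1 + l) * fst (ftp_step p (y1,y2) r) + phi l (a,b) (y1,y2)
  /\ fst (snd (ldc_step l p (a,b) r)) <= snd (snd (ldc_step l p (a,b) r))
  /\ fst (snd (ftp_step p (y1,y2) r)) <= snd (snd (ftp_step p (y1,y2) r)).
Proof.
  intros Hl Hab Hy. unfold phi, ldc_step, ftp_step.
  destruct p.
  - destruct (Rle_dec r a); [split; [|split]; crush|].
    destruct (Rle_dec b r); [split; [|split]; crush|].
    destruct (Rle_dec (l * (r - a)) (b - r)).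
    + split; [|split]; crush.
    + assert (Hl0 : 0 < l) by nra.
      assert (Hd : l * ((b - r) / l) = b - r) by (field; lra).
      generalize dependent ((b - r) / l); intros d Hd.
      split; [|split]; crush.
  - destruct (Rle_dec r a); [split; [|split]; crush|].
    destruct (Rle_dec b r); [split; [|split]; crush|].
    destruct (Rle_dec (l * (b - r)) (r - a)).
    + split; [|split]; crush.
    + assert (Hl0 : 0 < l) by nra.
      assert (Hd : l * ((r - a) / l) = r - a) by (field; lra).
      generalize dependent ((r - a) / l); intros d Hd.
      split; [|split]; crush.
Qed.

Lemma phi_nonneg l x y : 0 <= l -> fst x <= snd x -> 0 <= phi l x y.
Proof.
  intros. unfold phi. pose proof (Rabs_pos (fst x - fst y)).
  pose proof (Rabs_pos (snd x - snd y)). nra.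
Qed.

Lemma run_bound l p (rs : list R) : 0 <= l <= 1 ->
  forall t a b y1 y2, a <= b -> y1 <= y2 ->
  run_cost (ldc_step l) (a,b) t rs p <=
  (1 + l) * run_cost ftp_step (y1,y2) t rs p + phi l (a,b) (y1,y2).
Proof.
  intros Hl. induction rs as [|r rs IH]; intros t a b y1 y2 Hab Hy; cbn [run_cost].
  - pose proof (phi_nonneg l (a,b) (y1,y2) ltac:(lra) ltac:(simpl; lra)). lra.
  - destruct (step l (p t) a b y1 y2 r Hl Hab Hy) as [H1 [H2 H3]].
    destruct (ldc_step l (p t) (a,b) r) as [cl [a' b']] eqn:E1.
    destruct (ftp_step (p t) (y1,y2) r) as [cf [y1' y2']] eqn:E2.
    cbn [fst snd] in *.
    specialize (IH (S t) a' b' y1' y2' H2 H3). nra.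
Qed.

Theorem lemma5 (x1 x2 : R) (hx : x1 <= x2) :
  exists c : R, 0 <= c /\
    forall (rs : list R) (p : nat -> idx) (lam : R),
      0 <= lam <= 1 ->
      LambdaDC lam x1 x2 rs p <= (1 + lam) * FtP x1 x2 rs p + c.
Proof.
  exists (x2 - x1). split; [lra|].
  intros rs p lam Hl. unfold LambdaDC, FtP.
  pose proof (run_bound lam p rs Hl 0 x1 x2 x1 x2 hx hx).
  unfold phi in H; simpl in H.
  replace (x1 - x1) with 0 in H by ring. replace (x2 - x2) with 0 in H by ring.
  rewrite Rabs_R0 in H. nra.
Qed.
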